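(* Every $w^*$-approximately Connes amenable dual Banach algebra is $w^*$-approximately weakly Connes amenable.
   Context: A dual Banach algebra is a Banach algebra $\mathfrak{A}$ which is the dual of a Banach space $\mathfrak{A}_*$ and whose multiplication is separately $w^*$-continuous. A derivation $D:\mathfrak{A}\to F$ is a continuous linear map with $D(ab)=D(a)\cdot b+a\cdot D(b)$; $\mathrm{ad}_x(a)=a\cdot x-x\cdot a$. A derivation $D:\mathfrak{A}\to E^*$ (with $E$ a Banach bimodule) is $w^*$-approximately inner if there is a net $(f_\alpha)\subseteq E^*$ with $D(a)=w^*\text{-}\lim_\alpha \mathrm{ad}_{f_\alpha}(a)$ for all $a$. A dual Banach bimodule $E=(E_* )^*$ ($E_*$ a closed submodule of $E^*$) is normal if the module actions are $w^*$-$w^*$ continuous. $\mathfrak{A}$ is $w^*$-approximately Connes amenable if for every normal dual Banach $\mathfrak{A}$-bimodule $E$, every $w^*$-$w^*$ continuous derivation $\mathfrak{A}\to E$ is $w^*$-approximately inner. For a Banach bimodule $E$, $\sigma wc(E)$ is the set of $x\in E$ such that $a\mapsto a\cdot x$, $a\mapsto x\cdot a$ are continuous from $(\mathfrak{A},w^* )$ to $(E,\sigma(E,E^* ))$; $j_{\mathfrak{A}}:\mathfrak{A}^*\to\sigma wc(\mathfrak{A})^*$ is the adjoint of the inclusion $\sigma wc(\mathfrak{A})\hookrightarrow\mathfrak{A}$. $\mathfrak{A}$ is $w^*$-approximately weakly Connes amenable if for every derivation $D:\mathfrak{A}\to\mathfrak{A}^*$ such that $j_{\mathfrak{A}}\circ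 D:\mathfrak{A}\to\sigma wc(\mathfrak{A})^*$ is $w^*$-$w^*$ continuous, the derivation $j_{\mathfrak{A}}\circ D$ is $w^*$-approximately inner (with the net taken in $\sigma wc(\mathfrak{A})^*$). *)

(* Defs.v *)
From HB Require Import structures.
From mathcomp Require Import all_boot all_order all_algebra.
From mathcomp Require Import complex.
From mathcomp Require Import classical_sets reals.
Set Implicit Arguments.
Unset Strict Implicit.
Unset Printing Implicit Defensive.
Import Order.TTheory GRing.Theory Num.Theory.
Local Open Scope ring_scope.
Local Open Scope classical_set_scope.

Section DualBanach.
Variable R : realType.
Local Notation C := (R[i]).

Definition absc (z : C) : R := Num.sqrt (complex.Re z ^+ 2 + complex.Im z ^+ 2).

Definition is_norm (E : lmodType C) (nE : E -> R) : Prop :=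
  [/\ forall x, 0 <= nE x,
      forall x, nE x = 0 -> x = 0,
      forall (c : C) x, nE (c *: x) = absc c * nE x
    & forall x y, nE (x + y) <= nE x + nE y].

Definition complete_norm (E : lmodType C) (nE : E -> R) : Prop :=
  forall u : nat -> E,
    (forall eps : R, 0 < eps -> exists N, forall m n,
        (N <= m)%N -> (N <= n)%N -> nE (u m - u n) < eps) ->
    exists l : E, forall eps : R, 0 < eps -> exists N, forall n,
        (N <= n)%N -> nE (u n - l) < eps.

Definition banach (E : lmodType C) (nE : E -> R) : Prop :=
  is_norm nE /\ complete_norm nE.

Definition opnorm_le (E : lmodType C) (nE : E -> R) (f : E -> C) (M : R) :=
  forall x, absc (f x) <= M * nE x.

Definition dual_elt (E : lmodType C) (nE : E -> R) (f : E -> C) : Prop :=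
  (forall (c : C) x y, f (c *: x + y) = c * f x + f y) /\
  exists M : R, opnorm_le nE f M.

(* E = (P)^* : P is a norm-closed linear subspace of E^* and the canonical
   map E -> P^*, x |-> (f |-> f x), is an isometric isomorphism onto P^*.
   (A predual E_* given abstractly is identified with its canonical image
   in E^*.) *)
Definition predual (E : lmodType C) (nE : E -> R) (P : set (E -> C)) : Prop :=
  (forall f, P f -> dual_elt nE f) /\
  [/\ P (fun _ => 0),
      (forall (c : C) f g, P f -> P g -> P (fun x => c * f x + g x)),
      (forall f, dual_elt nE f ->
         (forall eps : R, 0 < eps -> exists g, P g /\
              opnorm_le nE (fun x => f x - g x) eps) -> P f),
      (* the canonical map E -> P^* is isometric *)
      (forall x (eps : R), 0 < eps ->
         exists f, [/\ P f, opnorm_le nE f 1 & nE x - eps < absc (f x)])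
    & (* ... and onto P^* *)
      (forall L : (E -> C) -> C,
         (forall (c : C) f g, P f -> P g ->
             L (fun x => c * f x + g x) = c * L f + L g) ->
         (exists M : R, forall f (N : R), P f -> 0 <= N -> opnorm_le nE f N ->
             absc (L f) <= M * N) ->
         exists x : E, forall f, P f -> L f = f x)].

(* T : A -> B is continuous from (A, sigma(A, FA)) to (B, sigma(B, FB)),
   where sigma(X, F) is the weak topology induced by the family F of
   functionals (unfolded via its defining subbasic neighbourhoods). *)
Definition wcont (A B : Type) (FA : set (A -> C)) (FB : set (B -> C))
  (T : A -> B) : Prop :=
  forall (a : A) (g : B -> C) (eps : R), FB g -> 0 < eps ->
    exists (n : nat) (fs : 'I_n -> A -> C) (delta : R),
      [/\ 0 < delta, (forall i, FA (fs i)) &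
          forall b, (forall i, absc (fs i b - fs i a) < delta) ->
             absc (g (T b) - g (T a)) < eps].

Definition directed (I : Type) (le : I -> I -> Prop) : Prop :=
  [/\ inhabited I, (forall i, le i i),
      (forall i j k, le i j -> le j k -> le i k)
    & (forall i j, exists k, le i k /\ le j k)].

Definition net_wlim (X : Type) (F : set (X -> C)) (I : Type)
  (le : I -> I -> Prop) (h : I -> X) (l : X) : Prop :=
  forall (g : X -> C) (eps : R), F g -> 0 < eps ->
    exists i0, forall i, le i0 i -> absc (g (h i) - g l) < eps.

Definition banach_algebra (A : lmodType C) (nA : A -> R) (mul : A -> A -> A)
  : Prop :=
  [/\ banach nA,
      (forall a b c, mul a (mul b c) = mul (mul a b) c),
      (forall (k : C) a b d, mul (k *: a + b) d = k *: mul a d + mul b d),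
      (forall (k : C) a b d, mul d (k *: a + b) = k *: mul d a + mul d b)
    & (forall a b, nA (mul a b) <= nA a * nA b)].

(* A = (A_* )^* with separately weak-star continuous multiplication;
   PA is (the canonical image in A^* of) the predual A_*. *)
Definition dual_banach_algebra (A : lmodType C) (nA : A -> R)
  (mul : A -> A -> A) (PA : set (A -> C)) : Prop :=
  [/\ banach_algebra nA mul, predual nA PA,
      (forall a, wcont PA PA (mul a))
    & (forall a, wcont PA PA (fun b => mul b a))].

Definition banach_bimodule (A : lmodType C) (nA : A -> R) (mul : A -> A -> A)
  (E : lmodType C) (nE : E -> R) (la : A -> E -> E) (ra : E -> A -> E)
  : Prop :=
  [/\ banach nE,
      (forall (k : C) a b x, la (k *: a + b) x = k *: la a x + la b x),
      (forall (k : C) a x y, la a (k *: x + y) = k *: la a x + la a y),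
      (forall (k : C) a b x, ra x (k *: a + b) = k *: ra x a + ra x b)
    & (forall (k : C) a x y, ra (k *: x + y) a = k *: ra x a + ra y a)] /\
  [/\ (forall a b x, la (mul a b) x = la a (la b x)),
      (forall a b x, ra x (mul a b) = ra (ra x a) b),
      (forall a b x, ra (la a x) b = la a (ra x b))
    & (exists M : R, forall a x,
          nE (la a x) <= M * nA a * nE x /\ nE (ra x a) <= M * nA a * nE x)].

(* normal dual Banach A-bimodule E = (PE)^*, PE a closed submodule of E^*
   (dual actions: (a.f)(x) = f(x.a), (f.a)(x) = f(a.x)) *)
Definition normal_dual_bimodule (A : lmodType C) (nA : A -> R)
  (mul : A -> A -> A) (PA : set (A -> C))
  (E : lmodType C) (nE : E -> R) (la : A -> E -> E) (ra : E -> A -> E)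
  (PE : set (E -> C)) : Prop :=
  [/\ banach_bimodule nA mul nE la ra,
      predual nE PE,
      (forall f a, PE f -> PE (fun x => f (ra x a)) /\ PE (fun x => f (la a x)))
    & (forall x, wcont PA PE (fun a => la a x) /\ wcont PA PE (fun a => ra x a))].

Definition derivation (A : lmodType C) (nA : A -> R) (mul : A -> A -> A)
  (E : lmodType C) (nE : E -> R) (la : A -> E -> E) (ra : E -> A -> E)
  (D : A -> E) : Prop :=
  [/\ (forall (k : C) a b, D (k *: a + b) = k *: D a + D b),
      (exists M : R, forall a, nE (D a) <= M * nA a)
    & (forall a b, D (mul a b) = ra (D a) b + la a (D b))].

Definition wapprox_inner (A : lmodType C) (E : lmodType C)
  (la : A -> E -> E) (ra : E -> A -> E) (PE : set (E -> C)) (D : A -> E)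
  : Prop :=
  exists (I : Type) (le : I -> I -> Prop) (f : I -> E),
    directed le /\
    forall a, net_wlim PE le (fun i => la a (f i) - ra (f i) a) (D a).

Definition wapprox_connes_amenable (A : lmodType C) (nA : A -> R)
  (mul : A -> A -> A) (PA : set (A -> C)) : Prop :=
  forall (E : lmodType C) (nE : E -> R) (la : A -> E -> E) (ra : E -> A -> E)
         (PE : set (E -> C)),
    normal_dual_bimodule nA mul PA nE la ra PE ->
    forall D : A -> E, derivation nA mul nE la ra D -> wcont PA PE D ->
      wapprox_inner la ra PE D.

Definition sigma_wc (A : lmodType C) (nA : A -> R) (mul : A -> A -> A)
  (PA : set (A -> C)) (x : A) : Prop :=
  wcont PA (dual_elt nA) (fun a => mul a x) /\
  wcont PA (dual_elt nA) (fun a => mul x a).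

(* weak-star topology of sigma wc(A)^*, elements of which are represented by
   functions A -> C (only their restriction to sigma wc(A) matters):
   it is induced by the evaluations at points of sigma wc(A). *)
Definition swc_eval (A : lmodType C) (nA : A -> R) (mul : A -> A -> A)
  (PA : set (A -> C)) : set ((A -> C) -> C) :=
  [set g | exists x, sigma_wc nA mul PA x /\ g = (fun F => F x)].

Definition swc_dual_elt (A : lmodType C) (nA : A -> R) (mul : A -> A -> A)
  (PA : set (A -> C)) (F : A -> C) : Prop :=
  (forall (c : C) x y, sigma_wc nA mul PA x -> sigma_wc nA mul PA y ->
      F (c *: x + y) = c * F x + F y) /\
  exists M : R, forall x, sigma_wc nA mul PA x -> absc (F x) <= M * nA x.

(* continuous derivation D : A -> A^*, with the dual module actions
   (a.f)(x) = f(x a), (f.a)(x) = f(a x) *)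
Definition derivation_to_dual (A : lmodType C) (nA : A -> R)
  (mul : A -> A -> A) (D : A -> A -> C) : Prop :=
  [/\ (forall a, dual_elt nA (D a)),
      (forall (k : C) a b x, D (k *: a + b) x = k * D a x + D b x),
      (exists M : R, forall a, opnorm_le nA (D a) (M * nA a))
    & (forall a b x, D (mul a b) x = D a (mul b x) + D b (mul x a))].

(* j_A o D : A -> sigma wc(A)^* is w*-approximately inner, with the net in
   sigma wc(A)^*; ad_F(a)(x) = (a.F - F.a)(x) = F(x a) - F(a x). *)
Definition wapprox_weakly_connes_amenable (A : lmodType C) (nA : A -> R)
  (mul : A -> A -> A) (PA : set (A -> C)) : Prop :=
  forall D : A -> A -> C,
    derivation_to_dual nA mul D ->
    wcont PA (swc_eval nA mul PA) D ->
    exists (I : Type) (le : I -> I -> Prop) (F : I -> A -> C),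
      [/\ directed le,
          (forall i, swc_dual_elt nA mul PA (F i))
        & forall a, net_wlim (swc_eval nA mul PA) le
              (fun i => fun x => F i (mul x a) - F i (mul a x)) (D a)].

End DualBanach.

(* Main.v *)
Require Import Defs.
From HB Require Import structures.
From mathcomp Require Import all_boot all_order all_algebra.
From mathcomp Require Import complex.
From mathcomp Require Import boolp classical_sets reals.
From mathcomp Require Import ring lra.
Set Implicit Arguments.
Unset Strict Implicit.
Unset Printing Implicit Defensive.
Import Order.TTheory GRing.Theory Num.Theory ComplexField.
Local Open Scope complex_scope.
Local Open Scope ring_scope.
Local Open Scope classical_set_scope.

Section Absc.
Variable R : realType.
Local Notation C := (R[i]).
Local Notation absc := (@absc R).

Lemma normcE (z : C) : `|z| = (absc z)%:C.
Proof. by rewrite normc_def. Qed.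

Lemma absc_ge0 z : 0 <= absc z.
Proof. by rewrite /Defs.absc sqrtr_ge0. Qed.

Lemma abscE z : absc z = complex.Re `|z|.
Proof. by rewrite normcE. Qed.

Lemma abscM (z w : C) : absc (z * w) = absc z * absc w.
Proof. by apply: (@complexI R); rewrite rmorphM /= -!normcE normrM. Qed.

Lemma abscD (z w : C) : absc (z + w) <= absc z + absc w.
Proof. by rewrite -lecR rmorphD /= -!normcE ler_normD. Qed.

Lemma abscN (z : C) : absc (- z) = absc z.
Proof. by apply: (@complexI R); rewrite -!normcE normrN. Qed.

Lemma absc0 : absc 0 = 0.
Proof. by apply: (@complexI R); rewrite -!normcE normr0. Qed.

Lemma absc_eq0 z : absc z = 0 -> z = 0.
Proof. by move=> h; apply/eqP; rewrite -normr_eq0 normcE h. Qed.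

Lemma absc_real (r : R) : absc r%:C = `|r|.
Proof. by rewrite /Defs.absc /= expr0n /= addr0 sqrtr_sqr. Qed.

Lemma abscB (z w : C) : absc (z - w) = absc (w - z).
Proof. by rewrite -abscN opprB. Qed.

Lemma Re_le_absc (z : C) : `|complex.Re z| <= absc z.
Proof.
rewrite /Defs.absc -(sqrtr_sqr (complex.Re z)) ler_wsqrtr // lerDl sqr_ge0 //.
Qed.

Lemma Im_le_absc (z : C) : `|complex.Im z| <= absc z.
Proof.
rewrite /Defs.absc -(sqrtr_sqr (complex.Im z)) ler_wsqrtr // lerDr sqr_ge0 //.
Qed.

Lemma absc_le_ReIm (z : C) : absc z <= `|complex.Re z| + `|complex.Im z|.
Proof.
have -> : absc z = absc ((complex.Re z)%:C + 'i%C * (complex.Im z)%:C).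
  by rewrite -complexE.
apply: le_trans (abscD _ _) _.
rewrite abscM !absc_real.
have -> : absc 'i%C = 1.
  by rewrite /Defs.absc /= expr0n /= add0r expr1n sqrtr1.
by rewrite mul1r.
Qed.

End Absc.

Section Sup.
Variable R : realType.

Lemma supU (E : set R) x0 B : E x0 -> (forall x, E x -> x <= B) ->
  forall x, E x -> x <= sup E.
Proof.
move=> Ex0 hB x Ex; apply: sup_upper_bound => //; split; first by exists x0.
by exists B.
Qed.

Lemma supL (E : set R) x0 B : E x0 -> (forall x, E x -> x <= B) -> sup E <= B.
Proof. by move=> Ex0 hB; apply: ge_sup; [exists x0|]. Qed.

Lemma supA (E : set R) x0 B eps : E x0 -> (forall x, E x -> x <= B) -> 0 < eps ->
  exists x, E x /\ sup E - eps < x.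
Proof.
move=> Ex0 hB e0; have hs : has_sup E by split; [exists x0|exists B].
by have [x Ex h] := sup_adherent e0 hs; exists x.
Qed.

Lemma le_of_lt_eps (a b : R) : (forall eps, 0 < eps -> a < b + eps) -> a <= b.
Proof. by move=> h; apply/ler_addgt0Pr => e e0; apply/ltW/h. Qed.

Lemma normB_lt (a b e : R) : `|a - b| < e -> b - e < a /\ a < b + e.
Proof. by rewrite ltr_norml => /andP[h1 h2]; split; lra. Qed.

Lemma R_complete (v : nat -> R) :
  (forall eps, 0 < eps -> exists N, forall m n,
        (N <= m)%N -> (N <= n)%N -> `|v m - v n| < eps) ->
  exists l, forall eps, 0 < eps -> exists N, forall n, (N <= n)%N -> `|v n - l| < eps.
Proof.
move=> hC.
pose X := [set x | exists N, forall n, (N <= n)%N -> x <= v n].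
have [N0 h0] := hC 1 ltr01.
have X0 : X (v N0 - 1).
  exists N0 => n hn; have [h h'] := normB_lt (h0 n N0 hn (leqnn _)); lra.
have Xb : forall x, X x -> x <= v N0 + 1.
  move=> x [N hN]; have := hN (maxn N N0) (leq_maxl _ _).
  have [h h'] := normB_lt (h0 (maxn N N0) N0 (leq_maxr _ _) (leqnn _)); lra.
exists (sup X) => eps e0.
have e20 : 0 < eps / 2%:R by rewrite divr_gt0 ?ltr0n.
have [N1 h1] := hC _ e20.
exists N1 => n hn; rewrite ltr_norml; apply/andP; split.
- suff : sup X <= v n + eps / 2%:R by lra.
  apply: supL X0 _ => x [N hN].
  have := hN (maxn N N1) (leq_maxl _ _).
  have [h h'] := normB_lt (h1 (maxn N N1) n (leq_maxr _ _) hn); lra.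
- suff : v n - eps / 2%:R <= sup X by lra.
  apply: (supU X0 Xb); exists N1 => m hm.
  have [h h'] := normB_lt (h1 n m hn hm); lra.
Qed.

End Sup.

Section Ccomplete.
Variable R : realType.
Local Notation C := (R[i]).

Lemma ReB (x y : C) : complex.Re (x - y) = complex.Re x - complex.Re y.
Proof. by case: x => a b; case: y. Qed.
Lemma ImB (x y : C) : complex.Im (x - y) = complex.Im x - complex.Im y.
Proof. by case: x => a b; case: y. Qed.

Lemma C_complete (u : nat -> C) :
  (forall eps : R, 0 < eps -> exists N, forall m n,
        (N <= m)%N -> (N <= n)%N -> absc (u m - u n) < eps) ->
  exists l : C, forall eps : R, 0 < eps -> exists N, forall n,
        (N <= n)%N -> absc (u n - l) < eps.
Proof.
move=> hC.
have [a ha] : exists l, forall eps, 0 < eps -> exists N, forall n, (N <= n)%N ->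
    `|complex.Re (u n) - l| < eps.
  apply: R_complete => e e0; have [N hN] := hC e e0; exists N => m n hm hn.
  by rewrite -ReB; apply: le_lt_trans (Re_le_absc _) (hN m n hm hn).
have [b hb] : exists l, forall eps, 0 < eps -> exists N, forall n, (N <= n)%N ->
    `|complex.Im (u n) - l| < eps.
  apply: R_complete => e e0; have [N hN] := hC e e0; exists N => m n hm hn.
  by rewrite -ImB; apply: le_lt_trans (Im_le_absc _) (hN m n hm hn).
exists (a +i* b) => e e0.
have e20 : 0 < e / 2%:R by rewrite divr_gt0 ?ltr0n.
have [N1 h1] := ha _ e20; have [N2 h2] := hb _ e20.
exists (maxn N1 N2) => n hn.
apply: le_lt_trans (absc_le_ReIm _) _.
rewrite ReB ImB /=.
have := h1 n (leq_trans (leq_maxl _ _) hn); have := h2 n (leq_trans (leq_maxr _ _) hn).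
lra.
Qed.
Definition cvgC (v : nat -> C) (l : C) :=
  forall e : R, 0 < e -> exists N, forall n, (N <= n)%N -> absc (v n - l) < e.

Lemma small0 (z : C) : (forall e : R, 0 < e -> absc z < e) -> z = 0.
Proof.
move=> h; apply: absc_eq0; apply/le_anti; rewrite absc_ge0 andbT.
by apply: le_of_lt_eps => e e0; rewrite add0r; apply: h.
Qed.

Lemma cvg_le (v : nat -> C) l w (B : R) N : cvgC v l ->
  (forall n, (N <= n)%N -> absc (v n - w) <= B) -> absc (l - w) <= B.
Proof.
move=> hv hB; apply: le_of_lt_eps => e e0.
have [N1 h1] := hv e e0; pose n := maxn N N1.
have := hB n (leq_maxl _ _); have := h1 n (leq_maxr _ _).
have := abscD (l - v n) (v n - w).
rewrite abscB addrA subrK; lra.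
Qed.

Lemma cvg_uniq v l1 l2 : cvgC v l1 -> cvgC v l2 -> l1 = l2.
Proof.
move=> h1 h2; apply/eqP; rewrite -subr_eq0; apply/eqP; apply: small0 => e e0.
have e20 : 0 < e / 2%:R by rewrite divr_gt0 ?ltr0n.
have [N1 g1] := h1 _ e20; have [N2 g2] := h2 _ e20; pose n := maxn N1 N2.
have := g1 n (leq_maxl _ _); have := g2 n (leq_maxr _ _).
have := abscD (l1 - v n) (v n - l2); rewrite abscB addrA subrK; lra.
Qed.

Lemma cvg_comb (a b : nat -> C) la lb (c : C) : cvgC a la -> cvgC b lb ->
  cvgC (fun n => c * a n + b n) (c * la + lb).
Proof.
move=> ha hb e e0.
have k0 : 0 < absc c + 1 by have := absc_ge0 c; lra.
have e20 : 0 < e / 2%:R / (absc c + 1) by rewrite !divr_gt0 ?ltr0n.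
have e2 : 0 < e / 2%:R by rewrite divr_gt0 ?ltr0n.
have [N1 g1] := ha _ e20; have [N2 g2] := hb _ e2.
exists (maxn N1 N2) => n hn.
have := g1 n (leq_trans (leq_maxl _ _) hn); have := g2 n (leq_trans (leq_maxr _ _) hn).
move=> h2 h1.
have -> : c * a n + b n - (c * la + lb) = c * (a n - la) + (b n - lb) by ring.
apply: le_lt_trans (abscD _ _) _; rewrite abscM.
have : absc c * absc (a n - la) <= absc c * (e / 2%:R / (absc c + 1)).
  by rewrite ler_wpM2l ?absc_ge0 // ltW.
have : absc c * (e / 2%:R / (absc c + 1)) <= e / 2%:R.
  rewrite mulrA ler_pdivrMr // [absc c * _]mulrC ler_wpM2l ?ltW //; lra.
lra.
Qed.

End Ccomplete.

Section Span.
Variable R : realType.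
Local Notation C := (R[i]).
Variable A : lmodType C.
Variable PA : set (A -> C).
Hypothesis hlin : forall f, PA f -> forall (c : C) x y, f (c *: x + y) = c * f x + f y.
Hypothesis hcomb : forall (c : C) f g, PA f -> PA g -> PA (fun x => c * f x + g x).
Hypothesis h0 : PA (fun _ => 0).

Lemma span_lemma (n : nat) (fs : 'I_n -> A -> C) (V : A -> Prop) (phi : A -> C) :
  (forall i, PA (fs i)) ->
  (forall (c : C) x y, V x -> V y -> V (c *: x + y)) ->
  (forall (c : C) x y, phi (c *: x + y) = c * phi x + phi y) ->
  (forall b, V b -> (forall i, fs i b = 0) -> phi b = 0) ->
  exists g, PA g /\ forall b, V b -> phi b = g b.
Proof.
elim: n fs V => [|n IH] fs V hfs hV hphi hker.
  exists (fun _ => 0); split => // b Vb; apply: hker => // -[] //.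
pose f := fs ord_max.
pose V' := fun b => V b /\ f b = 0.
have [||||g [PAg hg]] := IH (fun i => fs (lift ord_max i)) V' => //.
- move=> c x y [Vx fx] [Vy fy]; split; first exact: hV.
  by rewrite /f hlin // -/f fx fy mulr0 addr0.
- move=> b [Vb fb] h; apply: hker => // i.
  by case: (unliftP ord_max i) => [j ->|->] //; apply: h.
have glin := hlin PAg.
have flin : forall (c : C) x y, f (c *: x + y) = c * f x + f y.
  by move=> c x y; exact: (hlin (hfs ord_max)).
case: (pselect (exists b0, V b0 /\ f b0 <> 0)) => [[b0 [Vb0 fb0]]|nex].
  pose k := (phi b0 - g b0) / f b0.
  exists (fun x => k * f x + g x); split; first exact: (hcomb k (hfs ord_max) PAg).
  move=> b Vb; pose t := f b / f b0.
  have fb0' : f b0 != 0 by apply/eqP.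
  have V'b : V' ((- t) *: b0 + b).
    split; first exact: hV.
    by rewrite flin /t mulNr -mulrA mulVf // mulr1 addNr.
  have := hg _ V'b; rewrite hphi glin => e.
  have -> : phi b = (- t * g b0 + g b) + t * phi b0 by rewrite -e; ring.
  rewrite /k /t; field; exact: fb0'.
exists g; split => // b Vb; apply: hg; split => //.
by apply: contrapT => fb; apply: nex; exists b.
Qed.

Lemma PA_of_cont (phi : A -> C) (a0 : A) :
  (forall (c : C) x y, phi (c *: x + y) = c * phi x + phi y) ->
  (exists (n : nat) (fs : 'I_n -> A -> C) (delta : R),
      [/\ 0 < delta, (forall i, PA (fs i)) &
          forall b, (forall i, absc (fs i b - fs i a0) < delta) ->
             absc (phi b - phi a0) < 1]) ->
  PA phi.
Proof.
move=> hphi [n [fs [delta [d0 hfs hb]]]].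
have [|||g [PAg hg]] := @span_lemma n fs (fun _ => True) phi hfs => //.
  move=> b _ hker; apply: contrapT => pb.
  have pb0 : 0 < absc (phi b).
    rewrite lt_def absc_ge0 andbT; apply/eqP => /absc_eq0; exact: pb.
  pose t : C := (2%:R / absc (phi b))%:C.
  have key : absc (phi (t *: b + a0) - phi a0) < 1.
    apply: hb => i.
    by rewrite (hlin (hfs i)) hker // mulr0 add0r subrr absc0.
  move: key; rewrite hphi addrK abscM /t absc_real ger0_norm ?divr_ge0 ?ler0n ?absc_ge0 //.
  rewrite divfK ?gt_eqF //; lra.
suff -> : phi = g by [].
by apply: funext => b; apply: hg.
Qed.

End Span.

Ltac ceq := apply/eqP; rewrite eq_complex /=; apply/andP; split; apply/eqP.

Lemma conj_absc (R : realType) (w : R[i]) : 0 < absc w ->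
  conjc w * ((absc w)^-1)%:C * w = (absc w)%:C.
Proof.
move=> aw0.
have e2 : absc w ^+ 2 = complex.Re w ^+ 2 + complex.Im w ^+ 2.
  by rewrite /Defs.absc sqr_sqrtr // addr_ge0 // sqr_ge0.
move: e2 aw0; case: w => a b /= e2 aw0.
ceq; last by ring.
apply: (@mulfI _ (absc (a +i* b))); first by rewrite gt_eqF.
rewrite -[in RHS]expr2 e2; field; rewrite gt_eqF //.
Qed.

Section HahnBanach.
Variable R : realType.
Local Notation C := (R[i]).
Variable A : lmodType C.
Variable nA : A -> R.
Hypothesis hn : is_norm nA.
Variable S : A -> Prop.
Hypothesis hS : forall (c : C) x y, S x -> S y -> S (c *: x + y).
Hypothesis S0 : S 0.
Variable psi : A -> C.
Hypothesis psi_lin : forall (c : C) x y, S x -> S y -> psi (c *: x + y) = c * psi x + psi y.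
Variable M : R.
Hypothesis M0 : 0 <= M.
Hypothesis psi_bd : forall x, S x -> absc (psi x) <= M * nA x.

Let p x := M * nA x.

Let nA_ge0 x : 0 <= nA x. Proof. by case: hn. Qed.
Let nAZ (c : C) x : nA (c *: x) = absc c * nA x. Proof. by case: hn. Qed.
Let nAD x y : nA (x + y) <= nA x + nA y. Proof. by case: hn. Qed.

Let p_ge0 x : 0 <= p x. Proof. by rewrite /p mulr_ge0. Qed.
Let pZ (s : R) x : p (s%:C *: x) = `|s| * p x.
Proof. by rewrite /p nAZ absc_real mulrCA. Qed.
Let pD x y : p (x + y) <= p x + p y.
Proof. by rewrite /p -mulrDr ler_wpM2l. Qed.

Let psi0 : psi 0 = 0.
Proof.
have := psi_lin 1 S0 S0; rewrite scale1r addr0 mul1r => h.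
by apply: (@addrI _ (psi 0)); rewrite addr0 -h.
Qed.

Let ReD (z w : C) : complex.Re (z + w) = complex.Re z + complex.Re w.
Proof. by case: z; case: w. Qed.
Let ReMr (t : R) (w : C) : complex.Re (t%:C * w) = t * complex.Re w.
Proof. by case: w => a b /=; rewrite mul0r subr0. Qed.

Let Gprops (G : set (A * R)) :=
  [/\ (forall x r1 r2, G (x, r1) -> G (x, r2) -> r1 = r2),
      (forall x1 r1 x2 r2 (t : R), G (x1, r1) -> G (x2, r2) ->
          G (t%:C *: x1 + x2, t * r1 + r2)),
      (forall x, S x -> G (x, complex.Re (psi x)))
    & (forall x r, G (x, r) -> r <= p x)].

Let P (G : set (A * R)) := G = set0 \/ Gprops G.

Let G0 : set (A * R) := [set z | S z.1 /\ z.2 = complex.Re (psi z.1)].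

Let G0props : Gprops G0.
Proof.
split.
- by move=> x r1 r2 [_ /= ->] [_ /= ->].
- move=> x1 r1 x2 r2 t [/= S1 ->] [/= S2 ->]; split => /=; first exact: hS.
  by rewrite psi_lin // ReD ReMr.
- by move=> x Sx.
- move=> x r [/= Sx ->]; apply: le_trans (psi_bd Sx).
  apply: le_trans (Re_le_absc _); exact: ler_norm.
Qed.

Let chain_ok : forall F : set (set (A * R)), F `<=` P -> total_on F subset ->
  P (\bigcup_(X in F) X).
Proof.
move=> F FP Ftot.
have memF : forall X z, F X -> X z -> Gprops X.
  move=> X z FX Xz; case: (FP X FX) => // X0; by rewrite X0 in Xz.
have both : forall X1 X2 z1 z2, F X1 -> F X2 -> X1 z1 -> X2 z2 ->
   exists X, [/\ F X, X z1 & X z2].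
  move=> X1 X2 z1 z2 F1 F2 h1 h2; case: (Ftot X1 X2 F1 F2) => s.
    by exists X2; split => //; apply: s.
  by exists X1; split => //; apply: s.
case: (pselect (exists z, (\bigcup_(X in F) X) z)) => [[z0 [X0 FX0 X0z0]]|nz]; last first.
  left; apply/seteqP; split => // z Uz; exfalso; apply: nz; by exists z.
right; have [f0 l0 s0 d0] := memF _ _ FX0 X0z0; split.
- move=> x r1 r2 [X1 F1 h1] [X2 F2 h2].
  have [X [FX h1' h2']] := both _ _ _ _ F1 F2 h1 h2.
  by have [f _ _ _] := memF _ _ FX h1'; apply: f h1' h2'.
- move=> x1 r1 x2 r2 t [X1 F1 h1] [X2 F2 h2].
  have [X [FX h1' h2']] := both _ _ _ _ F1 F2 h1 h2.
  have [_ l _ _] := memF _ _ FX h1'; exists X => //; exact: l.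
- by move=> x Sx; exists X0 => //; apply: s0.
- move=> x r [X FX h]; have [_ _ _ d] := memF _ _ FX h; exact: d.
Qed.

Let Gmax : exists G, Gprops G /\ forall B, G `<` B -> ~ P B.
Proof.
have [G [PG Gm]] := Zorn_bigcup chain_ok.
exists G; split => //; case: PG => // G00.
exfalso; apply: (Gm G0); last by right.
rewrite G00; split => // h.
have : G0 (0, complex.Re (psi 0)) by split.
by move=> /h.
Qed.

Let domG : forall G, Gprops G -> (forall B, G `<` B -> ~ P B) ->
  forall x0, exists r, G (x0, r).
Proof.
move=> G [Gf Gl GS Gd] Gm x0; apply: contrapT => nx.
have G00 : G (0, 0) by have := GS 0 S0; rewrite psi0.
have scaled : forall y r (s : R), G (y, r) -> G (s%:C *: y, s * r).
  by move=> y r s h; have := Gl _ _ _ _ s h G00; rewrite !addr0.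
pose V := [set v | exists z rz, G (z, rz) /\ v = rz - p (z - x0)].
have V0 : V (0 - p (0 - x0)) by exists 0, 0.
have Vub : forall z2 r2, G (z2, r2) -> forall v, V v -> v <= p (z2 + x0) - r2.
  move=> z2 r2 h2 v [z [rz [hz ->]]].
  have := Gd _ _ (Gl _ _ _ _ 1 hz h2); rewrite scale1r mul1r.
  have := pD (z - x0) (z2 + x0).
  have -> : z - x0 + (z2 + x0) = z + z2 by rewrite addrACA addNr addr0.
  lra.
pose c := sup V.
have c_lb : forall z rz, G (z, rz) -> rz - p (z - x0) <= c.
  by move=> z rz h; apply: (supU V0 (Vub _ _ G00)); exists z, rz.
have c_ub : forall z2 r2, G (z2, r2) -> c <= p (z2 + x0) - r2.
  by move=> z2 r2 h; apply: (supL V0 (Vub _ _ h)).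
pose G' := [set w | exists y r (t : R), G (y, r) /\ w = (y + t%:C *: x0, r + t * c)].
have G'props : Gprops G'.
  split.
  - move=> x r1 r2 [y1 [s1 [t1 [h1 [ex1 er1]]]]] [y2 [s2 [t2 [h2 [ex2 er2]]]]].
    case: (eqVneq t1 t2) => [et|nt].
      subst t2; have ey : y1 = y2.
        by apply: (@addIr _ (t1%:C *: x0)); rewrite -ex1 -ex2.
      by subst y2; rewrite er1 er2 (Gf _ _ _ h1 h2).
    exfalso; apply: nx; exists ((t1 - t2)^-1 * (s2 - s1)).
    have h21 : G (y2 - y1, s2 - s1).
      have := Gl _ _ _ _ (-1) h1 h2.
      by rewrite rmorphN rmorph1 scaleN1r mulN1r addrC [- s1 + _]addrC.
    have ex : x0 = ((t1 - t2)^-1)%:C *: (y2 - y1).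
      have e : (t1 - t2)%:C *: x0 = y2 - y1.
        have e12 : y1 + t1%:C *: x0 = y2 + t2%:C *: x0 by rewrite -ex1 -ex2.
        rewrite rmorphB scalerBl -[t1%:C *: x0](addKr y1) e12.
        by rewrite addrA addrK addrC.
      rewrite -e scalerA -rmorphM mulVf ?rmorph1 ?scale1r //.
      by rewrite subr_eq0.
    by rewrite ex; apply: scaled.
  - move=> x1 r1 x2 r2 t [y1 [s1 [t1 [h1 [-> ->]]]]] [y2 [s2 [t2 [h2 [-> ->]]]]].
    exists (t%:C *: y1 + y2), (t * s1 + s2), (t * t1 + t2); split; first exact: Gl.
    congr pair; last by ring.
    rewrite scalerDr scalerA -rmorphM rmorphD scalerDl.
    by rewrite addrACA.
  - move=> x Sx; exists x, (complex.Re (psi x)), 0; split; first exact: GS.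
    by rewrite rmorph0 scale0r addr0 mul0r addr0.
  - move=> x r [y [s [t [h [-> ->]]]]].
    case: (ltrgtP t 0) => [tn|tp|->]; last first.
    + by rewrite rmorph0 scale0r addr0 mul0r addr0; apply: Gd.
    + have := c_ub _ _ (scaled _ _ t^-1 h).
      have -> : p (y + t%:C *: x0) = t * p (t^-1%:C *: y + x0).
        rewrite -[t in t * _]gtr0_norm // -pZ scalerDr scalerA -rmorphM.
        by rewrite mulfV ?gt_eqF // rmorph1 scale1r.
      move=> hc; have := ler_wpM2l (ltW tp) hc.
      rewrite mulrBr [t * (t^-1 * s)]mulrA mulfV ?gt_eqF // mul1r; lra.
    + have tp : 0 < - t by rewrite oppr_gt0.
      have := c_lb _ _ (scaled _ _ (- t)^-1 h).
      have -> : p (y + t%:C *: x0) = - t * p ((- t)^-1%:C *: y - x0).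
        rewrite -{1}(gtr0_norm tp) -pZ scalerDr scalerA -rmorphM.
        rewrite mulfV ?gt_eqF // rmorph1 scale1r scalerN.
        by rewrite rmorphN scaleNr opprK.
      move=> hc; have := ler_wpM2l (ltW tp) hc.
      rewrite mulrBr [- t * ((- t)^-1 * s)]mulrA mulfV ?gt_eqF // mul1r; lra.
have Gsub : G `<` G'.
  split.
    move=> [y r] h; exists y, r, 0; split => //.
    by rewrite rmorph0 scale0r addr0 mul0r addr0.
  move=> h; apply: nx; exists c; apply: h.
  exists 0, 0, 1; split => //.
  by rewrite rmorph1 scale1r add0r mul1r add0r.
by apply: (Gm G' Gsub); right.
Qed.

Lemma hahn_banach : exists Psi : A -> C,
  dual_elt nA Psi /\ forall x, S x -> Psi x = psi x.
Proof.
have [G [[Gf Gl GS Gd] Gm]] := Gmax.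
have dom := domG (And4 Gf Gl GS Gd) Gm.
pose u x := projT1 (cid (dom x)).
have uG x : G (x, u x) := projT2 (cid (dom x)).
have ulin (t : R) x y : u (t%:C *: x + y) = t * u x + u y.
  exact: Gf _ _ _ (uG _) (Gl _ _ _ _ t (uG x) (uG y)).
have ule x : u x <= p x := Gd _ _ (uG x).
have uS x : S x -> u x = complex.Re (psi x) by move=> Sx; exact: Gf _ _ _ (uG x) (GS x Sx).
pose Psi x : C := Complex (u x) (- u ('i *: x)).
have Psi_lin : forall (c : C) x y, Psi (c *: x + y) = c * Psi x + Psi y.
  move=> [a b] x y.
  have ec : (a +i* b) *: x = a%:C *: x + b%:C *: ('i *: x).
    rewrite scalerA -scalerDl; congr (_ *: _); ceq; ring.
  have eic : 'i *: ((a +i* b) *: x + y) = a%:C *: ('i *: x) + ((- b)%:C *: x + 'i *: y).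
    rewrite scalerDr !scalerA addrA -scalerDl; congr (_ + _); congr (_ *: _); ceq; ring.
  rewrite /Psi eic ec -addrA !ulin.
  ceq; ring.
have Psi0 : Psi 0 = 0.
  have := Psi_lin 1 0 0; rewrite scale1r addr0 mul1r => h.
  by apply: (@addrI _ (Psi 0)); rewrite addr0 -h.
have PsiZ (c : C) x : Psi (c *: x) = c * Psi x.
  by have := Psi_lin c x 0; rewrite !addr0 Psi0 addr0.
exists Psi; split; last first.
  move=> x Sx; have Six : S ('i *: x) by have := hS 'i Sx S0; rewrite addr0.
  rewrite /Psi uS // uS //.
  have -> : psi ('i *: x) = 'i * psi x.
    by have := psi_lin 'i Sx S0; rewrite !addr0 psi0 addr0.
  by case: (psi x) => a b /=; ceq; ring.
split; first by move=> c x y; apply: Psi_lin.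
exists M => x.
set w := Psi x.
case: (eqVneq w 0) => [->|wn0]; first by rewrite absc0 mulr_ge0.
have aw0 : 0 < absc w.
  rewrite lt_def absc_ge0 andbT; apply/eqP => /absc_eq0 /eqP; exact/negP.
pose k := (absc w)^-1.
pose l : C := conjc w * k%:C.
have lw : l * w = (absc w)%:C.
  by rewrite /l /k conj_absc.
have al : absc l = 1.
  rewrite /l abscM absc_real /k ger0_norm ?invr_ge0 ?absc_ge0 //.
  have -> : absc (conjc w) = absc w.
    by case: (w) => a b; rewrite /Defs.absc /= sqrrN.
  by rewrite mulfV ?gt_eqF.
have : absc w = u (l *: x).
  have : complex.Re (Psi (l *: x)) = u (l *: x) by [].
  by rewrite PsiZ -/w lw /=.
move=> ->; apply: le_trans (ule _) _.
by rewrite /p nAZ al mul1r.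
Qed.

End HahnBanach.

Section SProps.
Variable R : realType.
Local Notation C := (R[i]).
Variable A : lmodType C.
Variable nA : A -> R.
Variable mul : A -> A -> A.
Variable PA : set (A -> C).
Hypothesis hD : dual_banach_algebra nA mul PA.

Let hBA : banach_algebra nA mul. Proof. by case: hD. Qed.
Let hnorm : is_norm nA. Proof. by case: hBA => -[]. Qed.
Let hcompl : complete_norm nA. Proof. by case: hBA => -[]. Qed.
Let mulA a b c : mul a (mul b c) = mul (mul a b) c. Proof. by case: hBA. Qed.
Let mulDl (k : C) a b d : mul (k *: a + b) d = k *: mul a d + mul b d.
Proof. by case: hBA. Qed.
Let mulDr (k : C) a b d : mul d (k *: a + b) = k *: mul d a + mul d b.
Proof. by case: hBA. Qed.
Let mulN a b : nA (mul a b) <= nA a * nA b. Proof. by case: hBA. Qed.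
Let hpre : predual nA PA. Proof. by case: hD. Qed.
Let PAdual f : PA f -> dual_elt nA f. Proof. by case: hpre => h _; apply: h. Qed.
Let PAlin f : PA f -> forall (c : C) x y, f (c *: x + y) = c * f x + f y.
Proof. by move=> /PAdual []. Qed.
Let PA0 : PA (fun _ => 0). Proof. by case: hpre => _ []. Qed.
Let PAcomb (c : C) f g : PA f -> PA g -> PA (fun x => c * f x + g x).
Proof. by move=> hf hg; case: hpre => _ [] _ h _ _ _; apply: h. Qed.
Let PAclosed f : dual_elt nA f ->
  (forall eps : R, 0 < eps -> exists g, PA g /\ opnorm_le nA (fun x => f x - g x) eps) ->
  PA f.
Proof. by move=> df hf; case: hpre => _ [] _ _ h _ _; exact: h df hf. Qed.
Let wl a : wcont PA PA (mul a). Proof. by case: hD. Qed.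
Let wr a : wcont PA PA (fun b => mul b a). Proof. by case: hD. Qed.

Let nA_ge0 x : 0 <= nA x. Proof. by case: hnorm. Qed.
Let nAZ (c : C) x : nA (c *: x) = absc c * nA x. Proof. by case: hnorm. Qed.

Definition PAcont (phi : A -> C) := forall (a0 : A) (eps : R), 0 < eps ->
  exists (n : nat) (fs : 'I_n -> A -> C) (delta : R),
    [/\ 0 < delta, (forall i, PA (fs i)) &
        forall b, (forall i, absc (fs i b - fs i a0) < delta) ->
          absc (phi b - phi a0) < eps].

Lemma PAcont_of_PA f : PA f -> PAcont f.
Proof.
move=> Pf a0 eps e0; exists 1%N, (fun _ => f), eps; split => // b.
by apply; exact: ord0.
Qed.

Lemma PA_of_PAcont f : (forall (c : C) x y, f (c *: x + y) = c * f x + f y) ->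
  PAcont f -> PA f.
Proof.
move=> flin fc; apply: (@PA_of_cont R A PA PAlin PAcomb PA0 f 0 flin).
exact: fc.
Qed.

Lemma wcontP (B : Type) (FB : set (B -> C)) (T : A -> B) :
  wcont PA FB T <-> forall g, FB g -> PAcont (fun a => g (T a)).
Proof.
split.
  by move=> h g FBg a0 eps e0; apply: h.
by move=> h a g eps FBg e0; apply: h.
Qed.

Lemma dual_pos g : dual_elt nA g -> exists M, 0 <= M /\ opnorm_le nA g M.
Proof.
move=> [_ [M hM]]; exists `|M|; split => // x.
apply: le_trans (hM x) _; apply: ler_wpM2r => //; exact: ler_norm.
Qed.

Lemma dual_mulr g a : dual_elt nA g -> dual_elt nA (fun y => g (mul y a)).
Proof.
move=> dg; have [[glin _] [M [M0 hM]]] := (dg, dual_pos dg); split.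
  by move=> c x y; rewrite mulDl glin.
exists (M * nA a) => x; apply: le_trans (hM _) _.
by rewrite -mulrA [nA a * _]mulrC ler_wpM2l.
Qed.

Lemma dual_mull g a : dual_elt nA g -> dual_elt nA (fun y => g (mul a y)).
Proof.
move=> dg; have [[glin _] [M [M0 hM]]] := (dg, dual_pos dg); split.
  by move=> c x y; rewrite mulDr glin.
exists (M * nA a) => x; apply: le_trans (hM _) _.
by rewrite -mulrA ler_wpM2l.
Qed.

Lemma PA_mull h a : PA h -> PA (fun b => h (mul a b)).
Proof.
move=> Ph; apply: PA_of_PAcont.
  by move=> c x y; rewrite mulDr (PAlin Ph).
by move: (wl a) => /wcontP; apply.
Qed.

Lemma PA_mulr h a : PA h -> PA (fun b => h (mul b a)).
Proof.
move=> Ph; apply: PA_of_PAcont.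
  by move=> c x y; rewrite mulDl (PAlin Ph).
by move: (wr a) => /wcontP; apply.
Qed.

Local Notation S := (sigma_wc nA mul PA).

Lemma S_iff x : S x <-> (forall g, dual_elt nA g ->
  PA (fun b => g (mul b x)) /\ PA (fun b => g (mul x b))).
Proof.
split.
  move=> [h1 h2] g dg; have [glin _] := dg; split; apply: PA_of_PAcont.
  - by move=> c y z; rewrite mulDl glin.
  - by move: h1 => /wcontP; apply.
  - by move=> c y z; rewrite mulDr glin.
  - by move: h2 => /wcontP; apply.
move=> h; split; apply/wcontP => g dg.
  by apply: PAcont_of_PA; case: (h g dg).
by apply: PAcont_of_PA; case: (h g dg).
Qed.

Lemma S_comb (c : C) x y : S x -> S y -> S (c *: x + y).
Proof.
move=> /S_iff hx /S_iff hy; apply/S_iff => g dg.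
have [glin _] := dg.
have [hx1 hx2] := hx g dg; have [hy1 hy2] := hy g dg.
split.
  have -> : (fun b => g (mul b (c *: x + y))) = (fun b => c * g (mul b x) + g (mul b y)).
    by apply: funext => b; rewrite mulDr glin.
  exact: PAcomb.
have -> : (fun b => g (mul (c *: x + y) b)) = (fun b => c * g (mul x b) + g (mul y b)).
  by apply: funext => b; rewrite mulDl glin.
exact: PAcomb.
Qed.

Lemma amul0l b : mul 0 b = 0.
Proof.
have := mulDl 1 0 0 b; rewrite !scale1r addr0 => h.
by apply: (@addrI _ (mul 0 b)); rewrite addr0 -h.
Qed.

Lemma amul0r b : mul b 0 = 0.
Proof.
have := mulDr 1 0 0 b; rewrite !scale1r addr0 => h.
by apply: (@addrI _ (mul b 0)); rewrite addr0 -h.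
Qed.

Lemma dual0 g : dual_elt nA g -> g 0 = 0.
Proof.
move=> [glin _]; have := glin 1 0 0; rewrite scale1r addr0 mul1r => h.
by apply: (@addrI _ (g 0)); rewrite addr0 -h.
Qed.

Lemma S0 : S 0.
Proof.
apply/S_iff => g dg.
have -> : (fun b => g (mul b 0)) = (fun _ => 0).
  by apply: funext => b; rewrite amul0r dual0.
have -> : (fun b => g (mul 0 b)) = (fun _ => 0).
  by apply: funext => b; rewrite amul0l dual0.
by split.
Qed.

Lemma S_mulr x a : S x -> S (mul x a).
Proof.
move=> /S_iff hx; apply/S_iff => g dg; split.
  have -> : (fun b => g (mul b (mul x a))) = (fun b => (fun y => g (mul y a)) (mul b x)).
    by apply: funext => b; rewrite mulA.
  by case: (hx _ (dual_mulr a dg)).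
have -> : (fun b => g (mul (mul x a) b)) = (fun b => (fun y => g (mul x y)) (mul a b)).
  by apply: funext => b; rewrite mulA.
have [_ h2] := hx _ dg; exact: (PA_mull a h2).
Qed.

Lemma S_mull x a : S x -> S (mul a x).
Proof.
move=> /S_iff hx; apply/S_iff => g dg; split.
  have -> : (fun b => g (mul b (mul a x))) = (fun b => (fun y => g (mul y x)) (mul b a)).
    by apply: funext => b; rewrite mulA.
  have [h1 _] := hx _ dg; exact: (PA_mulr a h1).
have -> : (fun b => g (mul (mul a x) b)) = (fun b => (fun y => g (mul a y)) (mul x b)).
  by apply: funext => b; rewrite mulA.
by case: (hx _ (dual_mull a dg)).
Qed.

Lemma linB (f : A -> C) : (forall (c : C) x y, f (c *: x + y) = c * f x + f y) ->
  forall u v, f (u - v) = f u - f v.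
Proof.
move=> flin u v; have := flin (-1) v u.
by rewrite scaleN1r mulN1r addrC [- f v + _]addrC.
Qed.

Lemma mulBr b u v : mul b (u - v) = mul b u - mul b v.
Proof.
have := mulDr (-1) v u b; rewrite !scaleN1r addrC => ->; by rewrite addrC.
Qed.

Lemma mulBl b u v : mul (u - v) b = mul u b - mul v b.
Proof.
have := mulDl (-1) v u b; rewrite !scaleN1r addrC => ->; by rewrite addrC.
Qed.

Lemma nAB u v : nA (u - v) = nA (v - u).
Proof.
have h1 : absc (-1 : C) = 1.
  by rewrite abscN /Defs.absc /= expr0n expr1n addr0 sqrtr1.
by rewrite -opprB -[-(v - u)]scaleN1r nAZ h1 mul1r.
Qed.

Lemma S_closed (xn : nat -> A) x : (forall n, S (xn n)) ->
  (forall eps, 0 < eps -> exists N, forall n, (N <= n)%N -> nA (xn n - x) < eps) ->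
  S x.
Proof.
move=> Sn hcv; apply/S_iff => g dg.
have [[glin _] [M [M0 hM]]] := (dg, dual_pos dg).
have approx : forall eps, 0 < eps -> exists n, M * nA (x - xn n) <= eps.
  move=> eps e0; have [N hN] := hcv (eps / (M + 1)) (divr_gt0 e0 (ltr_wpDl M0 ltr01)).
  exists N; have := hN N (leqnn _); rewrite nAB => h.
  have M1 : 0 < M + 1 by lra.
  apply: le_trans (ler_wpM2l M0 (ltW h)) _.
  by rewrite mulrA ler_pdivrMr // mulrDr mulr1 [eps * M]mulrC lerDl ltW.
split; apply: PAclosed.
- exact: dual_mulr.
- move=> eps e0; have [n hn] := approx eps e0.
  exists (fun b => g (mul b (xn n))); split; first by case: (proj1 (S_iff _) (Sn n) g dg).
  move=> b; rewrite -(linB glin) -mulBr.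
  apply: le_trans (hM _) _; apply: le_trans (ler_wpM2l M0 (mulN _ _)) _.
  rewrite mulrCA [eps * _]mulrC ler_wpM2l //.
- exact: dual_mull.
- move=> eps e0; have [n hn] := approx eps e0.
  exists (fun b => g (mul (xn n) b)); split; first by case: (proj1 (S_iff _) (Sn n) g dg).
  move=> b; rewrite -(linB glin) -mulBl.
  apply: le_trans (hM _) _; apply: le_trans (ler_wpM2l M0 (mulN _ _)) _.
  by rewrite mulrA ler_wpM2r.
Qed.

End SProps.

Section ESpace.
Variable R : realType.
Local Notation C := (R[i]).
Variable A : lmodType C.
Variable nA : A -> R.
Variable mul : A -> A -> A.
Variable PA : set (A -> C).
Local Notation S := (sigma_wc nA mul PA).

Definition Epred (F : A -> C) :=
  [/\ forall x, ~ S x -> F x = 0,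
      forall (c : C) x y, S x -> S y -> F (c *: x + y) = c * F x + F y
    & exists M : R, forall x, S x -> absc (F x) <= M * nA x].

Record Etype := mkE { Ef :> A -> C; Ep : Epred Ef }.

Lemma E_ext (u v : Etype) : Ef u = Ef v -> u = v.
Proof.
case: u => f pf; case: v => g pg /= e; subst g.
by rewrite (Prop_irrelevance pf pg).
Qed.

Lemma Epred0 : Epred (fun _ => 0).
Proof.
split => //; first by move=> *; rewrite mulr0 addr0.
by exists 0 => x _; rewrite absc0 mul0r.
Qed.

Lemma Epred_add (u v : Etype) : Epred (fun x => u x + v x).
Proof.
case: u => f [f0 fl [M1 fb]]; case: v => g [g0 gl [M2 gb]]; split => /=.
- by move=> x nx; rewrite f0 // g0 // addr0.
- by move=> c x y Sx Sy; rewrite fl // gl //; ring.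
- exists (M1 + M2) => x Sx; apply: le_trans (abscD _ _) _.
  by rewrite mulrDl lerD // ?fb ?gb.
Qed.

Lemma Epred_opp (u : Etype) : Epred (fun x => - u x).
Proof.
case: u => f [f0 fl [M1 fb]]; split => /=.
- by move=> x nx; rewrite f0 // oppr0.
- by move=> c x y Sx Sy; rewrite fl //; ring.
- by exists M1 => x Sx; rewrite abscN fb.
Qed.

Lemma Epred_scale (c : C) (u : Etype) : Epred (fun x => c * u x).
Proof.
case: u => f [f0 fl [M1 fb]]; split => /=.
- by move=> x nx; rewrite f0 // mulr0.
- by move=> k x y Sx Sy; rewrite fl //; ring.
- exists (absc c * M1) => x Sx; rewrite abscM -mulrA ler_wpM2l ?absc_ge0 //.
  exact: fb.
Qed.

Definition zeroE := mkE Epred0.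
Definition addE u v := mkE (Epred_add u v).
Definition oppE u := mkE (Epred_opp u).
Definition scaleE c u := mkE (Epred_scale c u).

HB.instance Definition _ := gen_eqMixin Etype.
HB.instance Definition _ := gen_choiceMixin Etype.

Lemma addEA : associative addE.
Proof. by move=> u v w; apply: E_ext; apply: funext => x /=; rewrite addrA. Qed.
Lemma addEC : commutative addE.
Proof. by move=> u v; apply: E_ext; apply: funext => x /=; rewrite addrC. Qed.
Lemma add0E : left_id zeroE addE.
Proof. by move=> u; apply: E_ext; apply: funext => x /=; rewrite add0r. Qed.
Lemma addNE : left_inverse zeroE oppE addE.
Proof. by move=> u; apply: E_ext; apply: funext => x /=; rewrite addNr. Qed.

HB.instance Definition _ := GRing.isZmodule.Build Etype addEA addEC add0E addNE.

Lemma scaleEA a b v : scaleE a (scaleE b v) = scaleE (a * b) v.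
Proof. by apply: E_ext; apply: funext => x /=; rewrite mulrA. Qed.
Lemma scale1E : left_id 1 scaleE.
Proof. by move=> u; apply: E_ext; apply: funext => x /=; rewrite mul1r. Qed.
Lemma scaleEDr : right_distributive scaleE +%R.
Proof. by move=> a u v; apply: E_ext; apply: funext => x /=; rewrite mulrDr. Qed.
Lemma scaleEDl v : {morph scaleE^~ v: a b / a + b}.
Proof. by move=> a b; apply: E_ext; apply: funext => x /=; rewrite mulrDl. Qed.

HB.instance Definition _ := GRing.Zmodule_isLmodule.Build C Etype
  scaleEA scale1E scaleEDr scaleEDl.

Lemma EaddE (u v : Etype) x : (u + v) x = u x + v x. Proof. by []. Qed.
Lemma EoppE (u : Etype) x : (- u) x = - u x. Proof. by []. Qed.
Lemma EscaleE c (u : Etype) x : (c *: u) x = c * u x. Proof. by []. Qed.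
Lemma EzeroE x : (0 : Etype) x = 0. Proof. by []. Qed.
Lemma EsubE (u v : Etype) x : (u - v) x = u x - v x. Proof. by []. Qed.

Definition nE (F : Etype) : R :=
  sup [set r | exists x, [/\ S x, nA x <= 1 & r = absc (F x)]].

End ESpace.


Section Main.
Variable R : realType.
Local Notation C := (R[i]).
Variable A : lmodType C.
Variable nA : A -> R.
Variable mul : A -> A -> A.
Variable PA : set (A -> C).
Hypothesis hD : dual_banach_algebra nA mul PA.

Let hBA : banach_algebra nA mul. Proof. by case: hD. Qed.
Let hnorm : is_norm nA. Proof. by case: hBA => -[]. Qed.
Let hcompl : complete_norm nA. Proof. by case: hBA => -[]. Qed.
Let mulA a b c : mul a (mul b c) = mul (mul a b) c. Proof. by case: hBA. Qed.
Let mulDl (k : C) a b d : mul (k *: a + b) d = k *: mul a d + mul b d.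
Proof. by case: hBA. Qed.
Let mulDr (k : C) a b d : mul d (k *: a + b) = k *: mul d a + mul d b.
Proof. by case: hBA. Qed.
Let mulN a b : nA (mul a b) <= nA a * nA b. Proof. by case: hBA. Qed.
Let hpre : predual nA PA. Proof. by case: hD. Qed.
Let nA_ge0 x : 0 <= nA x. Proof. by case: hnorm. Qed.
Let nA_eq0 x : nA x = 0 -> x = 0. Proof. by case: hnorm => _ h _ _; apply: h. Qed.
Let nAZ (c : C) x : nA (c *: x) = absc c * nA x. Proof. by case: hnorm. Qed.
Let nAD x y : nA (x + y) <= nA x + nA y. Proof. by case: hnorm. Qed.

Local Notation S := (sigma_wc nA mul PA).
Local Notation E := (Etype nA mul PA).
Local Notation nE := (@nE R A nA mul PA).

Let S0 : S 0 := S0 hD.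
Let S_comb (c : C) x y : S x -> S y -> S (c *: x + y) := @S_comb _ _ _ _ _ hD c x y.
Let S_scale (c : C) x : S x -> S (c *: x).
Proof. by move=> Sx; have := S_comb c Sx S0; rewrite addr0. Qed.
Let S_sub x y : S x -> S y -> S (x - y).
Proof. by move=> Sx Sy; have := S_comb (-1) Sy Sx; rewrite scaleN1r addrC. Qed.

Lemma Eoff (F : E) x : ~ S x -> F x = 0. Proof. by move: (Ep F) => [h _ _]; apply: h. Qed.
Lemma Elin (F : E) (c : C) x y : S x -> S y -> F (c *: x + y) = c * F x + F y.
Proof. by move: (Ep F) => [_ h _]; apply: h. Qed.
Lemma Ebd (F : E) : exists M, forall x, S x -> absc (F x) <= M * nA x.
Proof. by move: (Ep F) => [_ _ h]. Qed.
Lemma E0 (F : E) : F 0 = 0.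
Proof.
have := Elin F 1 S0 S0; rewrite scale1r addr0 mul1r => h.
by apply: (@addrI _ (F 0)); rewrite addr0 -h.
Qed.
Lemma EZ (F : E) (c : C) x : S x -> F (c *: x) = c * F x.
Proof. by move=> Sx; have := Elin F c Sx S0; rewrite !addr0 E0 addr0. Qed.
Lemma EB (F : E) x y : S x -> S y -> F (x - y) = F x - F y.
Proof.
move=> Sx Sy; have := Elin F (-1) Sy Sx.
by rewrite scaleN1r mulN1r addrC [- F y + _]addrC.
Qed.

Definition nEset (F : E) := [set r | exists x, [/\ S x, nA x <= 1 & r = absc (F x)]].
Let nA0 : nA 0 = 0.
Proof. by rewrite -(scale0r (0 : A)) nAZ absc0 mul0r. Qed.

Lemma nEset0 F : nEset F 0.
Proof. by exists 0; rewrite E0 absc0 nA0; split. Qed.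

Lemma nEsetb (F : E) : exists B, forall r, nEset F r -> r <= B.
Proof.
have [M hM] := Ebd F; exists `|M| => r [x [Sx x1 ->]].
apply: le_trans (hM _ Sx) _; apply: le_trans (ler_wpM2r (nA_ge0 x) (ler_norm M)) _.
by rewrite -[leRHS]mulr1 ler_wpM2l.
Qed.

Lemma nE_ge0 F : 0 <= nE F.
Proof. by have [B hB] := nEsetb F; apply: (supU (nEset0 F) hB (nEset0 F)). Qed.

Lemma nE_ub (F : E) x : S x -> nA x <= 1 -> absc (F x) <= nE F.
Proof. by move=> Sx x1; have [B hB] := nEsetb F; apply: (supU (nEset0 F) hB); exists x. Qed.

Lemma N1 (F : E) x : S x -> absc (F x) <= nE F * nA x.
Proof.
move=> Sx; case: (eqVneq (nA x) 0) => [/nA_eq0 ->|nz].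
  by rewrite E0 absc0 nA0 mulr0.
have np : 0 < nA x by rewrite lt_def nz nA_ge0.
pose c : C := ((nA x)^-1)%:C.
have ac : absc c = (nA x)^-1 by rewrite absc_real ger0_norm // invr_ge0.
have := nE_ub F (S_scale c Sx).
rewrite nAZ ac mulVf // lexx EZ // abscM ac => /(_ isT).
by rewrite mulrC ler_pdivrMr.
Qed.

Lemma N2 (F : E) B : 0 <= B -> (forall x, S x -> absc (F x) <= B * nA x) -> nE F <= B.
Proof.
move=> B0 hB; apply: (supL (nEset0 F)) => r [x [Sx x1 ->]].
apply: le_trans (hB _ Sx) _; by rewrite -[leRHS]mulr1 ler_wpM2l.
Qed.

Lemma N3 (F : E) eps : 0 < eps -> exists x, [/\ S x, nA x <= 1 & nE F - eps < absc (F x)].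
Proof.
move=> e0; have [B hB] := nEsetb F.
have [r [[x [Sx x1 ->]] h]] := supA (nEset0 F) hB e0.
by exists x.
Qed.


Lemma nE_norm : is_norm nE.
Proof.
split.
- exact: nE_ge0.
- move=> F F0; apply: E_ext; apply: funext => x /=.
  case: (pselect (S x)) => Sx; last exact: Eoff.
  have := N1 F Sx; rewrite F0 mul0r => h.
  by apply: absc_eq0; apply/le_anti; rewrite h absc_ge0.
- move=> c F.
  have le1 : forall (c : C) (F : E), nE (c *: F) <= absc c * nE F.
    move=> k G; apply: N2; first by rewrite mulr_ge0 ?absc_ge0 ?nE_ge0.
    move=> x Sx; rewrite EscaleE abscM -mulrA ler_wpM2l ?absc_ge0 //.
    exact: N1.
  apply/le_anti; rewrite le1 /=.
  case: (eqVneq c 0) => [->|cn0]; first by rewrite absc0 mul0r nE_ge0.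
  have ac : 0 < absc c.
    by rewrite lt_def absc_ge0 andbT; apply/eqP => /absc_eq0 /eqP; apply/negP.
  have := le1 c^-1 (c *: F); rewrite scalerA mulVf // scale1r.
  have -> : absc c^-1 = (absc c)^-1.
    apply: (@mulfI _ (absc c)); first by rewrite gt_eqF.
    by rewrite -abscM mulfV // mulfV ?gt_eqF // -(rmorph1 (real_complex R)) absc_real normr1.
  move=> h; have := ler_wpM2l (ltW ac) h; by rewrite mulrA mulfV ?gt_eqF // mul1r.
- move=> F G; apply: N2; first by rewrite addr_ge0 ?nE_ge0.
  move=> x Sx; rewrite EaddE mulrDl; apply: le_trans (abscD _ _) _.
  by rewrite lerD ?N1.
Qed.

Lemma nE_complete : complete_norm nE.
Proof.
move=> u hC.
have ptC : forall x, S x -> forall e : R, 0 < e -> exists N, forall m n,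
    (N <= m)%N -> (N <= n)%N -> absc (u m x - u n x) < e.
  move=> x Sx e e0.
  have k0 : 0 < nA x + 1 by have := nA_ge0 x; lra.
  have [N hN] := hC (e / (nA x + 1)) (divr_gt0 e0 k0).
  exists N => m n hm hn; rewrite -EsubE; apply: le_lt_trans (N1 _ Sx) _.
  apply: le_lt_trans (ler_wpM2r (nA_ge0 x) (ltW (hN m n hm hn))) _.
  rewrite mulrAC ltr_pdivrMr // ltr_pM2l //; lra.
have hl : forall x, exists l : C, (S x -> cvgC (fun n => u n x) l) /\ (~ S x -> l = 0).
  move=> x; case: (pselect (S x)) => Sx.
    by have [l hl] := C_complete (ptC x Sx); exists l; split.
  by exists 0; split.
pose f x := projT1 (cid (hl x)).
have fS x : S x -> cvgC (fun n => u n x) (f x) by exact: (projT2 (cid (hl x))).1.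
have fN x : ~ S x -> f x = 0 by exact: (projT2 (cid (hl x))).2.
have [N0 h0] := hC 1 ltr01.
have pf : Epred nA mul PA f.
  split => //.
  - move=> c x y Sx Sy.
    apply: (cvg_uniq (fS _ (S_comb c Sx Sy))).
    have -> : (fun n => u n (c *: x + y)) = (fun n => c * u n x + u n y).
      by apply: funext => n; rewrite Elin.
    exact: cvg_comb (fS _ Sx) (fS _ Sy).
  - exists (nE (u N0) + 1) => x Sx.
    rewrite -[f x]subr0; apply: (cvg_le (N := N0) (fS _ Sx)) => n hn.
    rewrite subr0 -[u n x](subrK (u N0 x)) -EsubE mulrDl mul1r addrC.
    apply: le_trans (abscD _ _) _; apply: lerD; first exact: N1.
    apply: le_trans (N1 _ Sx) _; rewrite -[leRHS]mul1r; apply: ler_wpM2r => //.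
    by apply: ltW; apply: h0.
exists (mkE pf) => e e0.
have e20 : 0 < e / 2%:R by rewrite divr_gt0 ?ltr0n.
have [N hN] := hC _ e20; exists N => n hn.
apply: le_lt_trans (_ : nE (u n - mkE pf) <= e / 2%:R) _; last first.
  rewrite ltr_pdivrMr ?ltr0n //; lra.
apply: N2; first exact: ltW.
move=> x Sx; rewrite EsubE /= abscB.
apply: (cvg_le (N := N) (fS _ Sx)) => m hm.
rewrite -EsubE; apply: le_trans (N1 _ Sx) _.
by apply: ler_wpM2r => //; apply: ltW; apply: hN.
Qed.

Lemma nE_banach : banach nE.
Proof. by split; [exact: nE_norm|exact: nE_complete]. Qed.

Lemma inv_small (e : R) : 0 < e -> exists N, forall n, (N <= n)%N -> n.+1%:R^-1 < e.
Proof.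
move=> e0; have [k hk] := ltr_add_invr e0; rewrite add0r in hk.
exists k => n hn; apply: le_lt_trans hk.
rewrite (@lef_pV2 _ n.+1%:R k.+1%:R) ?posrE ?ltr0n // ler_nat; exact: hn.
Qed.

Definition restr (f : A -> C) y := if `[< S y >] then f y else 0.
Lemma restrS f y : S y -> restr f y = f y.
Proof. by move=> Sy; rewrite /restr asboolT. Qed.
Lemma restrN f y : ~ S y -> restr f y = 0.
Proof. by move=> Sy; rewrite /restr asboolF. Qed.

Lemma Epred_restr (f : A -> C) (M : R) :
  (forall (c : C) x y, S x -> S y -> f (c *: x + y) = c * f x + f y) ->
  (forall x, S x -> absc (f x) <= M * nA x) -> Epred nA mul PA (restr f).
Proof.
move=> flin fb; split.
- exact: restrN.
- by move=> c x y Sx Sy; rewrite !restrS ?flin //; apply: S_comb.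
- by exists M => x Sx; rewrite restrS //; apply: fb.
Qed.

Lemma norming x eps : S x -> 0 < eps ->
  exists F : E, nE F <= 1 /\ nA x - eps < absc (F x).
Proof.
move=> Sx e0.
have hiso : forall x (eps : R), 0 < eps ->
    exists f, [/\ PA f, opnorm_le nA f 1 & nA x - eps < absc (f x)].
  by case: hpre => _ [] _ _ _ h _.
have [f [PAf f1 hf]] := hiso x eps e0.
have [flin _] : dual_elt nA f by case: hpre => h _; apply: h.
have pf : Epred nA mul PA (restr f).
  apply: (@Epred_restr f 1); first by move=> c y z _ _; apply: flin.
  by move=> y Sy; apply: f1.
exists (mkE pf); split; last by rewrite /= restrS.
apply: N2 => // y Sy; rewrite /= restrS //; exact: f1.
Qed.

Definition PE : set (E -> C) := [set g | exists x, S x /\ g = (fun F : E => F x)].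

Lemma ev_bd x : S x -> opnorm_le nE (fun F : E => F x) (nA x).
Proof. by move=> Sx F; rewrite mulrC; apply: N1. Qed.

Lemma PE_closed (phi : E -> C) : dual_elt nE phi ->
  (forall eps : R, 0 < eps -> exists g, PE g /\ opnorm_le nE (fun F => phi F - g F) eps) ->
  PE phi.
Proof.
move=> dphi happ.
have hx : forall n : nat, exists x, S x /\ opnorm_le nE (fun F : E => phi F - F x) (n.+1%:R^-1).
  move=> n; have np : 0 < n.+1%:R^-1 :> R by rewrite invr_gt0 ltr0n.
  have [g [[x [Sx ->]] hg]] := happ _ np.
  by exists x.
pose xs n := projT1 (cid (hx n)).
have Sxs n : S (xs n) by exact: (projT2 (cid (hx n))).1.
have hxs n : opnorm_le nE (fun F : E => phi F - F (xs n)) (n.+1%:R^-1).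
  exact: (projT2 (cid (hx n))).2.
have cauchy m n : nA (xs m - xs n) <= m.+1%:R^-1 + n.+1%:R^-1.
  apply: le_of_lt_eps => e e0.
  have [F [F1 hF]] := norming (S_sub (Sxs m) (Sxs n)) e0.
  suff hh : absc (F (xs m - xs n)) <= m.+1%:R^-1 + n.+1%:R^-1.
    by rewrite -ltrBlDr; exact: lt_le_trans hF hh.
  rewrite EB //.
  have -> : F (xs m) - F (xs n) = (phi F - F (xs n)) - (phi F - F (xs m)) by ring.
  apply: le_trans (abscD _ _) _; rewrite abscN addrC.
  by apply: lerD; apply: le_trans (hxs _ F) _; rewrite -[leRHS]mulr1 ler_wpM2l // ?invr_ge0 ?ler0n.
have [x hx0] : exists x, forall eps, 0 < eps -> exists N, forall n, (N <= n)%N ->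
    nA (xs n - x) < eps.
  apply: hcompl => e e0.
  have e20 : 0 < e / 2%:R by rewrite divr_gt0 ?ltr0n.
  have [N hN] := inv_small e20; exists N => m n hm hn.
  apply: le_lt_trans (cauchy m n) _.
  by apply: lt_le_trans (ltrD (hN m hm) (hN n hn)) _; rewrite -splitr.
have Sx : S x := S_closed hD Sxs hx0.
exists x; split => //; apply: funext => F; apply/eqP; rewrite -subr_eq0; apply/eqP.
apply: small0 => e e0.
have k0 : 0 < nE F + 1 by have := nE_ge0 F; lra.
have e2 : 0 < e / 2%:R / (nE F + 1) by rewrite !divr_gt0 ?ltr0n.
have [Na h1] := inv_small e2; have [Nb h2] := hx0 _ e2.
pose n := maxn Na Nb.
have := h1 n (leq_maxl _ _); have := h2 n (leq_maxr _ _) => q2 q1.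
have -> : phi F - F x = (phi F - F (xs n)) + F (xs n - x) by rewrite EB //; ring.
apply: le_lt_trans (abscD _ _) _.
have b1 := hxs n F; have b2 := N1 F (S_sub (Sxs n) Sx).
have c1 : n.+1%:R^-1 * nE F <= e / 2%:R / (nE F + 1) * nE F.
  by rewrite ler_wpM2r ?nE_ge0 // ltW.
have c2 : nE F * nA (xs n - x) <= nE F * (e / 2%:R / (nE F + 1)).
  by rewrite ler_wpM2l ?nE_ge0 // ltW.
have c3 : e / 2%:R / (nE F + 1) * nE F < e / 2%:R.
  rewrite mulrAC ltr_pdivrMr // ltr_pM2l ?divr_gt0 ?ltr0n //; lra.
have d1 := le_trans b1 c1; have d2 := le_trans b2 c2.
apply: le_lt_trans (lerD d1 d2) _; rewrite [nE F * _]mulrC.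
by apply: lt_le_trans (ltrD c3 c3) _; rewrite -splitr.
Qed.

Lemma PE_predual : predual nE PE.
Proof.
split.
  move=> g [x [Sx ->]]; split; first by move=> c F G.
  by exists (nA x); apply: ev_bd.
split.
- exists 0; split; first exact: S0.
  by apply: funext => F; rewrite E0.
- move=> c f g [x [Sx ->]] [y [Sy ->]]; exists (c *: x + y); split; first exact: S_comb.
  by apply: funext => F; rewrite Elin.
- exact: PE_closed.
- move=> F eps e0; have [x [Sx x1 h]] := N3 F e0.
  exists (fun G : E => G x); split => //; first by exists x.
  move=> G; apply: le_trans (N1 G Sx) _; rewrite mul1r -[leRHS]mulr1 ler_wpM2l //.
  exact: nE_ge0.
- move=> L Llin [M hM].
  have pf : Epred nA mul PA (restr (fun y => L (fun F : E => F y))).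
    apply: (@Epred_restr _ M).
      move=> c x y Sx Sy.
      have -> : (fun F : E => F (c *: x + y)) = (fun F : E => c * F x + F y).
        by apply: funext => F; rewrite Elin.
      by apply: Llin; [exists x|exists y].
    move=> x Sx; apply: hM; [by exists x|exact: nA_ge0|exact: ev_bd].
  by exists (mkE pf) => f [x [Sx ->]] /=; rewrite restrS.
Qed.

Lemma Epred_la (a : A) (F : E) : Epred nA mul PA (restr (fun x => F (mul x a))).
Proof.
apply: (@Epred_restr _ (nE F * nA a)).
  move=> c x y Sx Sy; rewrite mulDl Elin //; exact: S_mulr.
move=> x Sx; apply: le_trans (N1 _ (S_mulr hD a Sx)) _.
rewrite -mulrA ler_wpM2l ?nE_ge0 // mulrC; exact: mulN.
Qed.

Lemma Epred_ra (a : A) (F : E) : Epred nA mul PA (restr (fun x => F (mul a x))).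
Proof.
apply: (@Epred_restr _ (nE F * nA a)).
  move=> c x y Sx Sy; rewrite mulDr Elin //; exact: S_mull.
move=> x Sx; apply: le_trans (N1 _ (S_mull hD a Sx)) _.
rewrite -mulrA ler_wpM2l ?nE_ge0 //; exact: mulN.
Qed.

Definition laE (a : A) (F : E) : E := mkE (Epred_la a F).
Definition raE (F : E) (a : A) : E := mkE (Epred_ra a F).

Lemma laES a F x : S x -> laE a F x = F (mul x a).
Proof. by move=> Sx; rewrite /= restrS. Qed.
Lemma raES a F x : S x -> raE F a x = F (mul a x).
Proof. by move=> Sx; rewrite /= restrS. Qed.
Lemma laEN a F x : ~ S x -> laE a F x = 0.
Proof. by move=> Sx; rewrite /= restrN. Qed.
Lemma raEN a F x : ~ S x -> raE F a x = 0.
Proof. by move=> Sx; rewrite /= restrN. Qed.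

Lemma E_eqS (F G : E) : (forall x, S x -> F x = G x) -> F = G.
Proof.
move=> h; apply: E_ext; apply: funext => x.
case: (pselect (S x)) => Sx; first exact: h.
by rewrite !Eoff.
Qed.

Lemma bimod : banach_bimodule nA mul nE laE raE.
Proof.
split; first split.
- exact: nE_banach.
- move=> k a b F; apply: E_eqS => x Sx.
  rewrite EaddE EscaleE !laES // mulDr Elin //; exact: S_mulr.
- move=> k a F G; apply: E_eqS => x Sx.
  by rewrite EaddE EscaleE !laES // EaddE EscaleE.
- move=> k a b F; apply: E_eqS => x Sx.
  rewrite EaddE EscaleE !raES // mulDl Elin //; exact: S_mull.
- move=> k a F G; apply: E_eqS => x Sx.
  by rewrite EaddE EscaleE !raES // EaddE EscaleE.
split.
- move=> a b F; apply: E_eqS => x Sx.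
  by rewrite !laES ?mulA //; apply: S_mulr.
- move=> a b F; apply: E_eqS => x Sx.
  by rewrite !raES ?mulA //; apply: S_mull.
- move=> a b F; apply: E_eqS => x Sx.
  by rewrite (raES _ _ Sx) (laES _ _ (S_mull hD b Sx)) (laES _ _ Sx) (raES _ _ (S_mulr hD a Sx)) mulA.
- exists 1 => a F; rewrite mul1r; split.
  + apply: N2; first by rewrite mulr_ge0 ?nE_ge0.
    move=> x Sx; rewrite laES //; apply: le_trans (N1 _ (S_mulr hD a Sx)) _.
    rewrite [nA a * _]mulrC -mulrA ler_wpM2l ?nE_ge0 // mulrC; exact: mulN.
  + apply: N2; first by rewrite mulr_ge0 ?nE_ge0.
    move=> x Sx; rewrite raES //; apply: le_trans (N1 _ (S_mull hD a Sx)) _.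
    rewrite [nA a * _]mulrC -mulrA ler_wpM2l ?nE_ge0 //; exact: mulN.
Qed.

Lemma E_ext_dual (F : E) : exists Psi : A -> C, dual_elt nA Psi /\ forall x, S x -> Psi x = F x.
Proof.
have [M hM] := Ebd F.
apply: (@hahn_banach R A nA hnorm S S_comb S0 (Ef F) (fun c x y Sx Sy => Elin F c Sx Sy) `|M|).
  exact: normr_ge0.
move=> x Sx; apply: le_trans (hM x Sx) _; apply: ler_wpM2r => //; exact: ler_norm.
Qed.

Lemma normal : normal_dual_bimodule nA mul PA nE laE raE PE.
Proof.
split.
- exact: bimod.
- exact: PE_predual.
- move=> f a [y [Sy ->]]; split.
    exists (mul a y); split; first exact: S_mull.
    by apply: funext => F; rewrite raES.
  exists (mul y a); split; first exact: S_mulr.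
  by apply: funext => F; rewrite laES.
- move=> F; have [Psi [dPsi hPsi]] := E_ext_dual F; split.
  + move=> a0 g eps [y [Sy ->]] e0.
    have [_ wy] := Sy.
    have [n [fs [delta [d0 hfs hb]]]] := wy a0 Psi eps dPsi e0.
    exists n, fs, delta; split => // b hbb.
    rewrite !laES // -(hPsi _ (S_mulr hD b Sy)) -(hPsi _ (S_mulr hD a0 Sy)); exact: hb.
  + move=> a0 g eps [y [Sy ->]] e0.
    have [wy _] := Sy.
    have [n [fs [delta [d0 hfs hb]]]] := wy a0 Psi eps dPsi e0.
    exists n, fs, delta; split => // b hbb.
    rewrite !raES // -(hPsi _ (S_mull hD b Sy)) -(hPsi _ (S_mull hD a0 Sy)); exact: hb.
Qed.

Theorem final : wapprox_connes_amenable nA mul PA ->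
  wapprox_weakly_connes_amenable nA mul PA.
Proof.
move=> hCA D [Ddual Dlin [MD hMD] Dder] Dcont.
have pfD : forall a, Epred nA mul PA (restr (D a)).
  move=> a; apply: (@Epred_restr _ (MD * nA a)).
    by move=> c x y _ _; case: (Ddual a) => h _; apply: h.
  by move=> x _; apply: hMD.
pose Dp a : E := mkE (pfD a).
have DpS a x : S x -> Dp a x = D a x by move=> Sx; rewrite /= restrS.
have hder : derivation nA mul nE laE raE Dp.
  split.
  - move=> k a b; apply: E_eqS => x Sx.
    by rewrite EaddE EscaleE !DpS // Dlin.
  - exists `|MD| => a; apply: N2; first by rewrite mulr_ge0 ?nA_ge0.
    move=> x Sx; rewrite DpS //; apply: le_trans (hMD a x) _.
    by apply: ler_wpM2r => //; apply: ler_wpM2r => //; exact: ler_norm.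
  - move=> a b; apply: E_eqS => x Sx.
    rewrite EaddE raES // laES // (DpS _ _ Sx) (DpS _ _ (S_mull hD b Sx)) (DpS _ _ (S_mulr hD a Sx)).
    exact: Dder.
have hcont : wcont PA PE Dp.
  move=> a0 g eps [y [Sy ->]] e0.
  have [n [fs [delta [d0 hfs hb]]]] := Dcont a0 (fun Fn => Fn y) eps
      (ex_intro _ y (conj Sy erefl)) e0.
  exists n, fs, delta; split => // b hbb.
  by rewrite !DpS //; apply: hb.
have [I [le [f [dir hnet]]]] := hCA E nE laE raE PE normal Dp hder hcont.
exists I, le, (fun i => Ef (f i)); split => //.
  move=> i; split; first by move=> c x y Sx Sy; apply: Elin.
  exact: Ebd.
move=> a g eps [y [Sy ->]] e0.
have [i0 hi0] := hnet a (fun G : E => G y) eps (ex_intro _ y (conj Sy erefl)) e0.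
exists i0 => i hi; have := hi0 i hi.
by rewrite EsubE laES // raES // DpS.
Qed.

End Main.


Theorem proposition3p8 (R : realType) (A : lmodType (R[i])) (nA : A -> R)
  (mul : A -> A -> A) (PA : set (A -> R[i])) :
  dual_banach_algebra nA mul PA ->
  wapprox_connes_amenable nA mul PA ->
  wapprox_weakly_connes_amenable nA mul PA.
Proof.
move=> hD hCA; exact: (final hD hCA).
Qed.
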